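(* Let $p$ be a prime and let $f\in\mathcal{B}(\mathbb{Q}_p(\mathbb{N}))$ be an idempotent whose image is a finite-dimensional $\mathbb{Q}_p$-vector space. Then $f$ is stably equivalent to zero, i.e. its class $[f]$ in $K_0(\mathcal{B}(\mathbb{Q}_p(\mathbb{N})))$ is zero.
   Context: $\mathbb{Q}_p(\mathbb{N})$ is the set of maps $\xi:\mathbb{N}\to\mathbb{Q}_p$ with $|\xi(i)|_p\le1$ for all but finitely many $i$, a $\mathbb{Z}_p$-module under coordinatewise operations, with the topology $\tau$ in which $A\subseteq\mathbb{Q}_p(\mathbb{N})$ is open iff for every finite $P\subseteq\mathbb{N}$ the set $A\cap\big(\prod_{i\in P}\mathbb{Q}_p\times\prod_{j\notin P}\mathbb{Z}_p\big)$ is open in the product topology. $\mathcal{B}(\mathbb{Q}_p(\mathbb{N}))$ is the ring of $\tau$-continuous $\mathbb{Z}_p$-linear maps. $K_0$ is the algebraic $K_0$-group of a unital ring, generated by classes of idempotent matrices. *)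

(* Defs.v *)
From mathcomp Require Import all_boot.
Set Implicit Arguments. Unset Strict Implicit. Unset Printing Implicit Defensive.

Section Padic.
Variable p : nat.

(* digits 0..p-1 (for p > 0 the type 'I_p.-1.+1 is 'I_p) *)
Definition digit := 'I_(p.-1).+1.
Definition mkdigit (d : nat) : digit := inord (d %% p).

(* Z_p: p-adic integers as digit streams  a = sum_i a_i p^i *)
Definition Zp := nat -> digit.
Definition trunc (a : Zp) (n : nat) : nat := \sum_(i < n) a i * p ^ i.
(* the element whose residue mod p^n is t n (for a coherent family t) *)
Definition of_trunc (t : nat -> nat) : Zp := fun n => mkdigit (t n.+1 %/ p ^ n).
Definition zzero : Zp := fun _ => ord0.
Definition zone : Zp := of_trunc (fun n => 1 %% p ^ n).
Definition zadd (a b : Zp) : Zp := of_trunc (fun n => (trunc a n + trunc b n) %% p ^ n).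
Definition zmul (a b : Zp) : Zp := of_trunc (fun n => (trunc a n * trunc b n) %% p ^ n).
Definition zopp (a : Zp) : Zp := of_trunc (fun n => (p ^ n - trunc a n) %% p ^ n).
Definition zshift (m : nat) (a : Zp) : Zp := fun i => if i < m then ord0 else a (i - m).

(* Q_p: a pair (k, a) stands for p^-k * a; normalized: k = 0 or p does not divide a *)
Definition qnormal (x : nat * Zp) : bool := (x.1 == 0) || (x.2 0 != ord0).
Fixpoint qnorm (k : nat) (a : Zp) : nat * Zp :=
  match k with
  | 0 => (0, a)
  | k'.+1 => if a 0 == ord0 then qnorm k' (fun i => a i.+1) else (k, a)
  end.
Lemma qnorm_normal k a : qnormal (qnorm k a).
Proof.
elim: k a => [|k IH] a //=.
case: eqP => H; first exact: IH.
by rewrite /qnormal /=; apply/eqP.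
Qed.
Definition Qp := {x : nat * Zp | qnormal x}.
Definition mkQ (k : nat) (a : Zp) : Qp := exist _ (qnorm k a) (qnorm_normal k a).

Definition qden (x : Qp) : nat := (proj1_sig x).1.
Definition qnum (x : Qp) : Zp := (proj1_sig x).2.
Definition qzero : Qp := mkQ 0 zzero.
Definition qone : Qp := mkQ 0 zone.
Definition qadd (x y : Qp) : Qp :=
  mkQ (qden x + qden y) (zadd (zshift (qden y) (qnum x)) (zshift (qden x) (qnum y))).
Definition qopp (x : Qp) : Qp := mkQ (qden x) (zopp (qnum x)).
Definition qmul (x y : Qp) : Qp := mkQ (qden x + qden y) (zmul (qnum x) (qnum y)).
Definition qzscale (c : Zp) (x : Qp) : Qp := mkQ (qden x) (zmul c (qnum x)).
Definition integral (x : Qp) : Prop := qden x = 0.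
Definition in_pnZp (n : nat) (x : Qp) : Prop :=
  qden x = 0 /\ forall i, i < n -> qnum x i = ord0.
Definition qclose (n : nat) (x y : Qp) : Prop := in_pnZp n (qadd y (qopp x)).

Definition vec := nat -> Qp.
Definition vzero : vec := fun _ => qzero.
Definition vadd (u v : vec) : vec := fun i => qadd (u i) (v i).
Definition vzscale (c : Zp) (u : vec) : vec := fun i => qzscale c (u i).
Definition vqscale (c : Qp) (u : vec) : vec := fun i => qmul c (u i).

Definition XP (P : seq nat) (xi : vec) : Prop := forall j, j \notin P -> integral (xi j).
Definition QpN (xi : vec) : Prop := exists P : seq nat, XP P xi.

(* A /\ X_P is open in X_P for the product topology *)
Definition open_in_XP (P : seq nat) (A : vec -> Prop) : Prop :=
  forall xi, XP P xi -> A xi ->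
    exists (F : seq nat) (n : nat), forall eta, XP P eta ->
      (forall i, i \in F -> qclose n (xi i) (eta i)) -> A eta.
Definition tau_open (A : vec -> Prop) : Prop := forall P : seq nat, open_in_XP P A.

Definition bmap := vec -> vec.
Definition tau_continuous (f : bmap) : Prop :=
  forall A, tau_open A -> tau_open (fun xi => QpN xi /\ A (f xi)).

Definition inB (f : bmap) : Prop :=
  [/\ forall xi, QpN xi -> QpN (f xi),
      forall xi eta, QpN xi -> QpN eta -> f (vadd xi eta) = vadd (f xi) (f eta),
      forall c xi, QpN xi -> f (vzscale c xi) = vzscale c (f xi)
    & tau_continuous f].

(* equality in B: agreement on Q_p(N) *)
Definition eqB (f g : bmap) : Prop := forall xi, QpN xi -> f xi = g xi.
Definition idB : bmap := id.
Definition zeroB : bmap := fun _ => vzero.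
Definition idempotentB (f : bmap) : Prop := eqB (fun xi => f (f xi)) f.

Definition image_findim (f : bmap) : Prop :=
  exists (d : nat) (v : 'I_d -> vec),
    (forall i, exists xi, QpN xi /\ v i = f xi) /\
    forall xi, QpN xi -> exists c : 'I_d -> Qp,
      f xi = \big[vadd/vzero]_(i < d) vqscale (c i) (v i).

Definition mx (m n : nat) := 'I_m -> 'I_n -> bmap.
Definition mx_inB m n (x : mx m n) : Prop := forall i j, inB (x i j).
Definition mxmul m n l (x : mx m n) (y : mx n l) : mx m l :=
  fun i j xi => \big[vadd/vzero]_(k < n) x i k (y k j xi).
Definition mx_eq m n (x y : mx m n) : Prop := forall i j, eqB (x i j) (y i j).
Definition dsum_id k (e : mx k k) (n : nat) : mx (k + n) (k + n) :=
  fun i j => match split i, split j with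
             | inl a, inl b => e a b
             | inr a, inr b => if a == b then idB else zeroB
             | _, _ => zeroB
             end.
Definition mvn_equiv k l (e : mx k k) (g : mx l l) : Prop :=
  exists (x : mx k l) (y : mx l k),
    [/\ mx_inB x, mx_inB y, mx_eq (mxmul x y) e & mx_eq (mxmul y x) g].
(* stable equivalence: e (+) 1_n ~ g (+) 1_n for some n, i.e. [e] = [g] in K_0(B) *)
Definition stably_equiv k l (e : mx k k) (g : mx l l) : Prop :=
  exists n, mvn_equiv (@dsum_id k e n) (@dsum_id l g n).

Definition mx1 (f : bmap) : mx 1 1 := fun _ _ => f.

End Padic.
Arguments dsum_id [p k] e n _ _ _ _.

(* Main.v *)
Require Import Defs.
From mathcomp Require Import all_boot.
From HB Require Import structures.
From mathcomp Require Import all_boot all_algebra.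
From mathcomp Require Import boolp zify ring.
Require Import Defs.
Set Implicit Arguments. Unset Strict Implicit. Unset Printing Implicit Defensive.

Section ZpTheory.
Variable q : nat.
Local Notation p := q.+2.
Local Notation Z := (Zp p).

Lemma expp_gt0 n : 0 < p ^ n.
Proof. by rewrite expn_gt0. Qed.

Lemma digit_lt (d : digit p) : (d : nat) < p.
Proof. by case: d. Qed.

Lemma trunc0 (a : Z) : trunc a 0 = 0.
Proof. by rewrite /trunc big_ord0. Qed.

Lemma truncS (a : Z) n : trunc a n.+1 = trunc a n + a n * p ^ n.
Proof. by rewrite /trunc big_ord_recr. Qed.

Lemma trunc_lt (a : Z) n : trunc a n < p ^ n.
Proof.
elim: n => [|n IH]; first by rewrite trunc0.
rewrite truncS expnS.
have := digit_lt (a n); move: (a n : nat) => d Hd.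
apply: (@leq_trans (p ^ n + d * p ^ n)); first by rewrite ltn_add2r.
by rewrite -{1}(mul1n (p ^ n)) -mulnDl leq_mul2r Hd orbT.
Qed.

Lemma trunc_mod (a : Z) m n : m <= n -> trunc a n %% p ^ m = trunc a m.
Proof.
elim: n => [|n IH]; first by rewrite leqn0 => /eqP ->; rewrite trunc0 mod0n.
rewrite leq_eqVlt => /orP [/eqP ->|Hm]; first by rewrite modn_small // trunc_lt.
rewrite ltnS in Hm.
have E : p ^ n = p ^ (n - m) * p ^ m by rewrite -expnD subnK.
by rewrite truncS E mulnA addnC modnMDl IH.
Qed.

Lemma Zp_ext (a b : Z) : (forall n, trunc a n = trunc b n) -> a = b.
Proof.
move=> H; apply: functional_extensionality_dep => i; apply: val_inj => /=.
have := H i.+1; rewrite !truncS H => /eqP; rewrite eqn_add2l eqn_pmul2r ?expp_gt0 //.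
by move/eqP.
Qed.

Lemma trunc_of_trunc (t : nat -> nat) :
  (forall n, t n < p ^ n) -> (forall n, t n.+1 %% p ^ n = t n) ->
  forall n, trunc (of_trunc p t) n = t n.
Proof.
move=> Hlt Hco; elim=> [|n IH].
  by rewrite trunc0; have := Hlt 0; rewrite expn0 ltnS leqn0 => /eqP ->.
rewrite truncS IH /of_trunc /mkdigit /=.
have Hq : t n.+1 %/ p ^ n < p by rewrite ltn_divLR ?expp_gt0 // -expnS.
rewrite inordK; last by rewrite ltn_pmod.
by rewrite (modn_small Hq) -{1}(Hco n) addnC -divn_eq.
Qed.

Lemma trunc_of_mod (g : nat -> nat) :
  (forall n, g n.+1 = g n %[mod p ^ n]) ->
  forall n, trunc (of_trunc p (fun n => g n %% p ^ n)) n = g n %% p ^ n.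
Proof.
move=> Hg; apply: trunc_of_trunc => n; first by rewrite ltn_pmod ?expp_gt0.
by rewrite modn_dvdm ?Hg // expnS dvdn_mull.
Qed.

Lemma trunc_zzero n : trunc (zzero p) n = 0.
Proof. by rewrite /trunc big1. Qed.

Lemma trunc_zone n : trunc (zone p) n = 1 %% p ^ n.
Proof. exact: trunc_of_mod. Qed.

Lemma trunc_zadd (a b : Z) n : trunc (zadd a b) n = (trunc a n + trunc b n) %% p ^ n.
Proof.
apply: (@trunc_of_mod (fun n => trunc a n + trunc b n) _ n) => k.
by rewrite -modnDm !trunc_mod // modnDm.
Qed.

Lemma trunc_zmul (a b : Z) n : trunc (zmul a b) n = (trunc a n * trunc b n) %% p ^ n.
Proof.
apply: (@trunc_of_mod (fun n => trunc a n * trunc b n) _ n) => k.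
by rewrite -modnMm !trunc_mod // modnMm.
Qed.

Lemma trunc_zopp (a : Z) n : trunc (zopp a) n = (p ^ n - trunc a n) %% p ^ n.
Proof.
apply: (@trunc_of_mod (fun n => p ^ n - trunc a n) _ n) => k.
have H1 := trunc_lt a k.+1.
have E : trunc a k.+1 = trunc a k + a k * p ^ k by rewrite truncS.
have Hd := digit_lt (a k).
rewrite E expnS.
have -> : p * p ^ k - (trunc a k + a k * p ^ k) = (p - a k).-1 * p ^ k + (p ^ k - trunc a k).
  have := trunc_lt a k; move: (trunc a k) (a k : nat) (p ^ k) Hd => t d P Hd Ht.
  have [e He] : exists e, p = d.+1 + e by exists (p - d.+1); rewrite subnKC.
  have -> : (p - d).-1 = e by rewrite He; lia.
  rewrite He !mulnDl mulSn; lia.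
by rewrite modnMDl.
Qed.

Lemma zaddA : associative (@zadd p).
Proof. by move=> a b c; apply: Zp_ext => n; rewrite !trunc_zadd modnDml modnDmr addnA. Qed.
Lemma zaddC : commutative (@zadd p).
Proof. by move=> a b; apply: Zp_ext => n; rewrite !trunc_zadd addnC. Qed.
Lemma zadd0 : left_id (zzero p) (@zadd p).
Proof. by move=> a; apply: Zp_ext => n; rewrite !trunc_zadd trunc_zzero modn_small // trunc_lt. Qed.
Lemma zaddN : left_inverse (zzero p) (@zopp p) (@zadd p).
Proof.
move=> a; apply: Zp_ext => n; rewrite trunc_zadd trunc_zopp trunc_zzero modnDml subnK ?modnn //.
exact: ltnW (trunc_lt a n).
Qed.
Lemma zmulA : associative (@zmul p).
Proof. by move=> a b c; apply: Zp_ext => n; rewrite !trunc_zmul modnMml modnMmr mulnA. Qed.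
Lemma zmulC : commutative (@zmul p).
Proof. by move=> a b; apply: Zp_ext => n; rewrite !trunc_zmul mulnC. Qed.
Lemma zmul1 : left_id (zone p) (@zmul p).
Proof. by move=> a; apply: Zp_ext => n; rewrite !trunc_zmul trunc_zone modnMml mul1n modn_small // trunc_lt. Qed.
Lemma zmulDl : left_distributive (@zmul p) (@zadd p).
Proof.
move=> a b c; apply: Zp_ext => n.
by rewrite !trunc_zmul !trunc_zadd !trunc_zmul modnMml mulnDl modnDm.
Qed.
Lemma zone_neq0 : zone p <> zzero p.
Proof. move=> H; have := trunc_zone 1; rewrite H trunc_zzero expn1 modn_small //. Qed.

End ZpTheory.

HB.instance Definition _ (q : nat) := gen_eqMixin (Zp q.+2).
HB.instance Definition _ (q : nat) := gen_choiceMixin (Zp q.+2).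
HB.instance Definition _ (q : nat) :=
  GRing.isZmodule.Build (Zp q.+2) (@zaddA q) (@zaddC q) (@zadd0 q) (@zaddN q).
HB.instance Definition _ (q : nat) :=
  GRing.Zmodule_isComNzRing.Build (Zp q.+2) (@zmulA q) (@zmulC q) (@zmul1 q) (@zmulDl q)
    (introN eqP (@zone_neq0 q)).



Import GRing.Theory.

Section ZpMore.
Variable q : nat.
Local Notation p := q.+2.
Local Notation Z := (Zp p).

Lemma trunc_zshift_ge (a : Z) m k : trunc (zshift m a) (m + k) = p ^ m * trunc a k.
Proof.
elim: k => [|k IH].
  rewrite addn0 trunc0 muln0 /trunc big1 // => i _.
  by rewrite /zshift ltn_ord.
rewrite addnS !truncS IH /zshift ltnNge leq_addr /= addKn mulnDr expnD.
by rewrite mulnCA.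
Qed.

Lemma trunc_zshift_le (a : Z) m n : n <= m -> trunc (zshift m a) n = 0.
Proof.
move=> H; rewrite /trunc big1 // => i _.
by rewrite /zshift (leq_trans (ltn_ord i) H).
Qed.

Lemma trunc_zshift (a : Z) m n : trunc (zshift m a) n = (p ^ m * trunc a n) %% p ^ n.
Proof.
case: (leqP n m) => H.
  rewrite trunc_zshift_le //; apply/esym/eqP; rewrite -/(dvdn _ _).
  by apply: dvdn_mulr; rewrite dvdn_exp2l.
have [k ->] : exists k, n = m + k by exists (n - m); rewrite subnKC // ltnW.
rewrite trunc_zshift_ge expnD -muln_modr.
by rewrite trunc_mod // leq_addl.
Qed.

Definition pw (m : nat) : Z := zshift m 1%R.

Lemma zshiftE (a : Z) m : zshift m a = (pw m * a)%R.
Proof.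
apply: Zp_ext => n.
rewrite [RHS]trunc_zmul !trunc_zshift trunc_zone modnMml.
case: n => [|n]; first by rewrite !expn0 !modn1.
by rewrite (@modn_small 1) ?muln1 // -{1}(expn0 p) ltn_exp2l.
Qed.

Lemma trunc_pw m n : trunc (pw m) n = (p ^ m) %% p ^ n.
Proof.
rewrite /pw trunc_zshift trunc_zone.
case: n => [|n]; first by rewrite !expn0 !modn1.
by rewrite (@modn_small 1) ?muln1 // -{1}(expn0 p) ltn_exp2l.
Qed.

Lemma zshift_add (a : Z) m n : zshift (m + n) a = zshift m (zshift n a).
Proof.
apply: funext => i; rewrite /zshift.
case: (ltnP i m) => H1.
  by rewrite ifT //; lia.
case: (ltnP (i - m) n) => H2.
  by rewrite ifT //; lia.
have -> : (i < m + n) = false by apply/negbTE; rewrite -leqNgt; lia.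
by rewrite subnDA.
Qed.

Lemma pw0 : pw 0 = 1%R.
Proof. by apply: Zp_ext => n; rewrite trunc_pw expn0 trunc_zone. Qed.

Lemma pwD m n : pw (m + n) = (pw m * pw n)%R.
Proof. by rewrite /pw zshift_add zshiftE. Qed.

Lemma zshift0 (a : Z) : zshift 0 a = a.
Proof. by rewrite zshiftE pw0 mul1r. Qed.

Lemma zshift_inj m : injective (@zshift p m).
Proof.
move=> a b H; apply: funext => i.
have := congr1 (fun f => f (i + m)) H; rewrite /zshift ltnNge leq_addl /= addnK //.
Qed.

Lemma zshift_zero m : zshift m (0 : Z)%R = 0%R.
Proof. by rewrite zshiftE mulr0. Qed.

Definition zdown (v : nat) (a : Z) : Z := fun i => a (i + v).

Lemma zdownK (a : Z) v : (forall i, i < v -> a i = ord0) -> zshift v (zdown v a) = a.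
Proof.
move=> H; apply: funext => i; rewrite /zshift /zdown.
by case: ltnP => Hi; [rewrite H | rewrite subnK].
Qed.

Lemma zshift_digit (a : Z) v i : i < v -> zshift v a i = ord0.
Proof. by rewrite /zshift => ->. Qed.

Lemma zzeroE : zzero p = 0%R. Proof. by []. Qed.

Lemma Zp_neq0_digit (a : Z) : a <> 0%R -> exists i, a i != ord0.
Proof.
move=> H; apply: contrapT => H'; apply: H; apply: funext => i.
apply/eqP; apply: contrapT => Hi; apply: H'; by exists i; apply/negP.
Qed.

Lemma Zp_decomp (a : Z) : a <> 0%R -> exists v (w : Z), w 0 != ord0 /\ a = zshift v w.
Proof.
move=> /Zp_neq0_digit H.
have Hmin := ex_minnP (ex_intro (fun i => a i != ord0) _ (proj2_sig (cid H))).
move: Hmin => [v Hv Hm].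
exists v, (zdown v a); split; first by rewrite /zdown add0n.
rewrite zdownK // => i Hi; apply/eqP; apply: contraTT Hi => Hi; rewrite -leqNgt; exact: Hm.
Qed.

Hypothesis hp : prime p.

Lemma trunc1 (a : Z) : trunc a 1 = a 0.
Proof. by rewrite truncS trunc0 expn0 muln1. Qed.

Lemma modinv_ex (t n : nat) : ~~ (p %| t) -> exists x, (x < p ^ n) && ((t * x) %% p ^ n == 1 %% p ^ n).
Proof.
move=> Ht; case: n => [|n]; first by exists 0; rewrite expn0 !modn1.
have Hc : coprime t (p ^ n.+1) by apply: coprimeXr; rewrite coprime_sym prime_coprime.
have Ht0 : 0 < t by case: t Ht Hc => //; rewrite dvdn0.
move/(coprimeP _ Ht0): Hc => [[u1 u2] /= Hu].
exists (u1 %% p ^ n.+1); rewrite ltn_pmod ?expp_gt0 //=.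
rewrite modnMmr mulnC.
have -> : u1 * t = 1 + u2 * p ^ n.+1.
  have Hpos : u2 * p ^ n.+1 < u1 * t by rewrite -subn_gt0 Hu.
  by rewrite -Hu subnK // ltnW.
by rewrite addnC modnMDl.
Qed.

Definition modinv (t n : nat) : nat :=
  match pselect (exists x, (x < p ^ n) && ((t * x) %% p ^ n == 1 %% p ^ n)) with
  | left H => xchoose H
  | right _ => 0
  end.

Lemma modinvP t n : ~~ (p %| t) -> (modinv t n < p ^ n) && ((t * modinv t n) %% p ^ n == 1 %% p ^ n).
Proof.
move=> Ht; rewrite /modinv; case: pselect => [H|H]; first exact: (xchooseP H).
by case: H; apply: modinv_ex.
Qed.

Lemma modinv_uniq (t x y P : nat) : x < P -> y < P -> (t * x) %% P = 1 %% P -> (t * y) %% P = 1 %% P -> x = y.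
Proof.
move=> Hx Hy Ex Ey.
rewrite -(modn_small Hx) -(modn_small Hy).
transitivity ((x * ((t * y) %% P)) %% P); first by rewrite Ey modnMmr muln1.
by rewrite modnMmr mulnA (mulnC x t) -modnMml Ex modnMml mul1n.
Qed.

Lemma Zp_unit (u : Z) : u 0 != ord0 -> exists w : Z, (u * w)%R = 1%R.
Proof.
move=> Hu.
have Hnd : forall n, ~~ (p %| trunc u n.+1).
  move=> n; have E : trunc u n.+1 %% p = u 0 by rewrite -{2}(expn1 p) trunc_mod // trunc1.
  rewrite /dvdn E.
  by apply: contra Hu => /eqP H; apply/eqP; apply: val_inj; rewrite /= H.
pose t n := match n with 0 => 0 | n'.+1 => modinv (trunc u n) n end.
have Ht : forall n, (t n < p ^ n) && ((trunc u n * t n) %% p ^ n == 1 %% p ^ n).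
  by case=> [|n] /=; [rewrite expn0 !modn1 | apply: modinvP].
exists (of_trunc p t).
have Htr : forall n, trunc (of_trunc p t) n = t n.
  apply: trunc_of_trunc => n; first by case/andP: (Ht n).
  apply: (@modinv_uniq (trunc u n) _ _ (p ^ n)).
  - by rewrite ltn_pmod ?expp_gt0.
  - by case/andP: (Ht n).
  - rewrite modnMmr -(@trunc_mod _ u n n.+1) // modnMml -(@modn_dvdm (p ^ n.+1)).
      by case/andP: (Ht n.+1) => _ /eqP ->; rewrite modn_dvdm // expnS dvdn_mull.
    by rewrite expnS dvdn_mull.
  - by case/andP: (Ht n) => _ /eqP.
apply: Zp_ext => n; rewrite trunc_zmul Htr trunc_zone.
by case/andP: (Ht n) => _ /eqP.
Qed.

End ZpMore.
Arguments pw {q} m _.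

Import GRing.Theory.
Local Open Scope ring_scope.

Section QpField.
Variable q : nat.
Local Notation p := q.+2.
Local Notation Z := (Zp p).
Local Notation Q := (Qp p).

Lemma qnormP k (a : Z) : ((qnorm k a).1 <= k)%N /\ a = zshift (k - (qnorm k a).1) (qnorm k a).2.
Proof.
elim: k a => [|k IH] a /=; first by rewrite zshift0.
case: eqP => H /=; last by rewrite subnn zshift0.
have [H1 H2] := IH (fun i => a i.+1).
split; first by rewrite (leq_trans H1).
have -> : (k.+1 - (qnorm k (fun i => a i.+1)).1)%N = (1 + (k - (qnorm k (fun i => a i.+1)).1))%N.
  by rewrite add1n subSn.
rewrite zshift_add -H2.
apply: funext => i; rewrite /zshift; case: i => [|i] //=.
by rewrite subn1.
Qed.

Definition sc (N : nat) (x : Q) : Z := zshift (N - qden x) (qnum x).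

Lemma qden_mkQ k (a : Z) : (qden (mkQ k a) <= k)%N.
Proof. by have [] := qnormP k a. Qed.

Lemma sc_mkQ N k (a : Z) : (k <= N)%N -> sc N (mkQ k a) = zshift (N - k) a.
Proof.
move=> Hk; have [H1 H2] := qnormP k a.
rewrite /sc /qden /qnum /= [in RHS]H2 -zshift_add; congr zshift; lia.
Qed.

Lemma Q_ext (x y : Q) : qden x = qden y -> qnum x = qnum y -> x = y.
Proof.
case: x y => [[k a] Hx] [[l b] Hy]; rewrite /qden /qnum /= => E1 E2.
subst; congr exist; exact: bool_irrelevance.
Qed.

Lemma sc_inj_aux (x y : Q) N : (qden x <= qden y)%N -> (qden y <= N)%N -> sc N x = sc N y -> x = y.
Proof.
move=> Hxy HyN; rewrite /sc.
have -> : (N - qden x)%N = ((N - qden y) + (qden y - qden x))%N by lia.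
rewrite zshift_add => /zshift_inj E.
case: (posnP (qden y - qden x)) => H.
  apply: Q_ext; first by lia.
  by rewrite -E H zshift0.
have Hy := proj2_sig y.
change (is_true ((qden y == 0%N) || (qnum y 0 != ord0))) in Hy.
rewrite -E zshift_digit // in Hy.
move: Hy; rewrite eqxx orbF => /eqP Hy0; lia.
Qed.

Lemma sc_inj (x y : Q) N : (qden x <= N)%N -> (qden y <= N)%N -> sc N x = sc N y -> x = y.
Proof.
move=> Hx Hy; case: (leqP (qden x) (qden y)) => H; first exact: sc_inj_aux.
move=> E; apply/esym; apply: (sc_inj_aux (ltnW H) Hx); exact/esym.
Qed.

Lemma zshiftD m (a b : Z) : zshift m (a + b) = zshift m a + zshift m b.
Proof. by rewrite !zshiftE mulrDr. Qed.
Lemma zshiftN m (a : Z) : zshift m (- a) = - zshift m a.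
Proof. by rewrite !zshiftE mulrN. Qed.

Lemma qden_add (x y : Q) : (qden (qadd x y) <= qden x + qden y)%N.
Proof. exact: qden_mkQ. Qed.
Lemma qden_opp (x : Q) : (qden (qopp x) <= qden x)%N.
Proof. exact: qden_mkQ. Qed.
Lemma qden_mul (x y : Q) : (qden (qmul x y) <= qden x + qden y)%N.
Proof. exact: qden_mkQ. Qed.
Lemma qden_zero : qden (qzero p) = 0%N.
Proof. by have := qden_mkQ 0 (zzero p); rewrite leqn0 => /eqP. Qed.
Lemma qden_one : qden (qone p) = 0%N.
Proof. by have := qden_mkQ 0 (zone p); rewrite leqn0 => /eqP. Qed.

Lemma sc_add N (x y : Q) : (qden x + qden y <= N)%N -> sc N (qadd x y) = sc N x + sc N y.
Proof.
move=> H; rewrite /qadd sc_mkQ //.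
change (zadd ?a ?b) with (a + b); rewrite zshiftD -!zshift_add /sc; congr (_ + _); congr zshift; lia.
Qed.

Lemma sc_opp N (x : Q) : (qden x <= N)%N -> sc N (qopp x) = - sc N x.
Proof. by move=> H; rewrite /qopp sc_mkQ //; change (zopp ?a) with (- a); rewrite zshiftN. Qed.

Lemma sc_mul N M (x y : Q) : (qden x <= N)%N -> (qden y <= M)%N ->
  sc (N + M)%N (qmul x y) = sc N x * sc M y.
Proof.
move=> H1 H2; rewrite /qmul sc_mkQ; last by lia.
change (zmul ?a ?b) with (a * b); rewrite /sc !zshiftE mulrACA -pwD; congr (pw _ * _); lia.
Qed.

Lemma sc_zero N : sc N (qzero p) = 0.
Proof. by rewrite /qzero sc_mkQ // zshift_zero. Qed.

Lemma sc_one N : sc N (qone p) = pw N.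
Proof. by rewrite /qone sc_mkQ // subn0 zshiftE mulr1. Qed.

Lemma sc_mono N M (x : Q) : (qden x <= N)%N -> sc (M + N)%N x = zshift M (sc N x).
Proof. by move=> H; rewrite /sc -zshift_add; congr zshift; lia. Qed.

Lemma qaddA : associative (@qadd p).
Proof.
move=> x y z; pose N := (qden x + qden y + qden z)%N.
have := qden_add x y; have := qden_add y z; have := qden_add (qadd x y) z; have := qden_add x (qadd y z) => h1 h2 h3 h4.
apply: (@sc_inj _ _ N); try lia.
rewrite !sc_add; try lia; by rewrite addrA.
Qed.

Lemma qaddC : commutative (@qadd p).
Proof.
move=> x y; pose N := (qden x + qden y)%N.
have := qden_add x y; have := qden_add y x => h1 h2.
apply: (@sc_inj _ _ N); try lia.
rewrite !sc_add; try lia; by rewrite addrC.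
Qed.

Lemma qadd0 : left_id (qzero p) (@qadd p).
Proof.
move=> x; pose N := qden x.
have := qden_add (qzero p) x; rewrite qden_zero => h1.
apply: (@sc_inj _ _ N); try lia.
rewrite sc_add ?sc_zero ?add0r // qden_zero.
Qed.

Lemma qaddN : left_inverse (qzero p) (@qopp p) (@qadd p).
Proof.
move=> x; pose N := (qden x + qden x)%N.
have := qden_add (qopp x) x; have := qden_opp x => h1 h2.
apply: (@sc_inj _ _ N); try lia; first by rewrite qden_zero.
rewrite sc_add ?sc_opp ?sc_zero ?addNr //; lia.
Qed.

Lemma qmulA : associative (@qmul p).
Proof.
move=> x y z.
have := qden_mul x y; have := qden_mul y z; have := qden_mul (qmul x y) z; have := qden_mul x (qmul y z) => h1 h2 h3 h4.
apply: (@sc_inj _ _ (qden x + (qden y + qden z))%N); try lia.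
rewrite sc_mul // sc_mul // addnA sc_mul // sc_mul // mulrA //.
Qed.

Lemma qmulC : commutative (@qmul p).
Proof.
move=> x y; have := qden_mul x y; have := qden_mul y x => h1 h2.
apply: (@sc_inj _ _ (qden x + qden y)%N); try lia.
rewrite sc_mul // addnC sc_mul // mulrC //.
Qed.

Lemma qmul1 : left_id (qone p) (@qmul p).
Proof.
move=> x; have := qden_mul (qone p) x; rewrite qden_one => h1.
apply: (@sc_inj _ _ (qden x)); try lia.
rewrite -[qden x]add0n sc_mul ?qden_one // sc_one pw0 mul1r //.
Qed.

Lemma qmulDl : left_distributive (@qmul p) (@qadd p).
Proof.
move=> x y z.
have := qden_mul (qadd x y) z; have := qden_add x y; have := qden_mul x z; have := qden_mul y z;
  have := qden_add (qmul x z) (qmul y z) => h1 h2 h3 h4 h5.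
apply: (@sc_inj _ _ (qden x + qden y + qden z + qden z)%N); try lia.
rewrite sc_mul ?sc_add //; try lia.
rewrite !sc_mul //; try lia.
by rewrite mulrDl.
Qed.

Lemma qone_neq0 : qone p <> qzero p.
Proof.
move=> H; have := congr1 (sc 0) H; rewrite sc_one sc_zero pw0.
by move/eqP; rewrite oner_eq0.
Qed.

End QpField.

Import GRing.Theory.
Local Open Scope ring_scope.

Section QpInv.
Variable q : nat.
Local Notation p := q.+2.
Local Notation Z := (Zp p).
Local Notation Q := (Qp p).

Definition qinv (x : Q) : Q :=
  match pselect (exists t : nat * Z * Z, qnum x = zshift t.1.1 t.1.2 /\ t.1.2 * t.2 = 1) with
  | left H => let t := proj1_sig (cid H) in mkQ t.1.1 (zshift (qden x) t.2)
  | right _ => qzero p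
  end.

Lemma qnum_zero : qnum (qzero p) = 0. Proof. by []. Qed.

Lemma qinv0 : qinv (qzero p) = qzero p.
Proof.
rewrite /qinv; case: pselect => // H; exfalso.
case: (cid H) => [[[v w] w'] /= [E1 E2]].
rewrite qnum_zero in E1.
have : w = 0 by apply: (@zshift_inj _ v); rewrite -E1 zshift_zero.
by move=> Ew; move: E2; rewrite Ew mul0r => /esym/eqP; rewrite oner_eq0.
Qed.

Lemma qnum0_zero (x : Q) : qnum x = 0 -> x = qzero p.
Proof.
move=> H; apply: Q_ext; rewrite ?qden_zero ?qnum_zero //.
have Hx := proj2_sig x.
change (is_true ((qden x == 0%N) || (qnum x 0 != ord0))) in Hx.
rewrite H in Hx; case/orP: Hx => [/eqP //| /eqP H0]; exfalso; exact: H0.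
Qed.

Hypothesis hp : prime p.

Lemma qmulV (x : Q) : x <> qzero p -> qmul (qinv x) x = qone p.
Proof.
move=> Hx.
have Hn : qnum x <> 0 by move=> H; apply: Hx; apply: qnum0_zero.
have Ht : exists t : nat * Z * Z, qnum x = zshift t.1.1 t.1.2 /\ t.1.2 * t.2 = 1.
  have [v [w [Hw E]]] := Zp_decomp Hn.
  have [w' Hw'] := Zp_unit hp Hw.
  by exists (v, w, w').
rewrite /qinv; case: pselect => // H.
case: (cid H) => [[[v w] w'] /= [E1 E2]].
have h1 := qden_mkQ v (zshift (qden x) w').
have h2 := qden_mul (mkQ v (zshift (qden x) w')) x.
apply: (@sc_inj _ _ _ ((v + qden x) + qden x)%N); rewrite ?qden_one; try lia.
rewrite sc_mul //; try lia.
rewrite sc_mkQ; last by lia.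
rewrite sc_one /sc subnn zshift0 E1 !zshiftE.
have -> : (v + qden x - v = qden x)%N by lia.
transitivity (pw (qden x) * pw (qden x) * pw v * (w * w')); first by ring.
rewrite E2 mulr1.
by rewrite -!pwD; congr pw; lia.
Qed.

End QpInv.

HB.instance Definition _ (q : nat) := gen_eqMixin (Qp q.+2).
HB.instance Definition _ (q : nat) := gen_choiceMixin (Qp q.+2).
HB.instance Definition _ (q : nat) :=
  GRing.isZmodule.Build (Qp q.+2) (@qaddA q) (@qaddC q) (@qadd0 q) (@qaddN q).
HB.instance Definition _ (q : nat) :=
  GRing.Zmodule_isComNzRing.Build (Qp q.+2) (@qmulA q) (@qmulC q) (@qmul1 q) (@qmulDl q)
    (introN eqP (@qone_neq0 q)).

Definition QF (q : nat) (hp : prime q.+2) := Qp q.+2.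
HB.instance Definition _ (q : nat) (hp : prime q.+2) := GRing.ComNzRing.on (QF hp).

Lemma qmulVf (q : nat) (hp : prime q.+2) (x : QF hp) : x != 0 -> qinv x * x = 1.
Proof. by move=> /eqP H; apply: (qmulV hp H). Qed.

HB.instance Definition _ (q : nat) (hp : prime q.+2) :=
  GRing.ComNzRing_isField.Build (QF hp) (@qmulVf q hp) (@qinv0 q).



Import GRing.Theory.
Local Open Scope ring_scope.

Section QpBasics.
Variable q : nat.
Local Notation p := q.+2.
Local Notation Z := (Zp p).
Local Notation Q := (Qp p).

Lemma qaddE (x y : Q) : qadd x y = x + y. Proof. by []. Qed.
Lemma qmulE (x y : Q) : qmul x y = x * y. Proof. by []. Qed.
Lemma qoppE (x : Q) : qopp x = - x. Proof. by []. Qed.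
Lemma qzeroE : qzero p = 0. Proof. by []. Qed.
Lemma qoneE : qone p = 1. Proof. by []. Qed.

Definition zQ (c : Z) : Q := mkQ 0 c.

Lemma qden_zQ c : qden (zQ c) = 0%N.
Proof. by have := qden_mkQ 0 c; rewrite leqn0 => /eqP. Qed.
Lemma qnum_zQ c : qnum (zQ c) = c. Proof. by []. Qed.

Lemma sc_zQ N c : sc N (zQ c) = pw N * c.
Proof. by rewrite /zQ sc_mkQ // subn0 zshiftE. Qed.

Lemma zQD a b : zQ (a + b) = zQ a + zQ b.
Proof.
have := qden_add (zQ a) (zQ b); rewrite !qden_zQ => h.
apply: (@sc_inj _ _ _ 0%N); [by rewrite qden_zQ | by [] | ].
change (zQ a + zQ b) with (qadd (zQ a) (zQ b)).
by rewrite sc_add ?qden_zQ // !sc_zQ pw0 !mul1r.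
Qed.

Lemma zQM a b : zQ (a * b) = zQ a * zQ b.
Proof.
have := qden_mul (zQ a) (zQ b); rewrite !qden_zQ => h.
apply: (@sc_inj _ _ _ 0%N); [by rewrite qden_zQ | by [] | ].
change (zQ a * zQ b) with (qmul (zQ a) (zQ b)).
by rewrite -[0%N]addn0 sc_mul ?qden_zQ // !sc_zQ pw0 !mul1r.
Qed.

Lemma zQ1 : zQ 1 = 1. Proof. by []. Qed.
Lemma zQ0 : zQ 0 = 0. Proof. by []. Qed.
Lemma zQN a : zQ (- a) = - zQ a.
Proof. by apply/eqP; rewrite -subr_eq0 opprK -zQD addNr zQ0. Qed.

Definition Pq : Q := zQ (pw 1).

Lemma zQ_pw n : zQ (pw n) = Pq ^+ n.
Proof. by elim: n => [|n IH]; rewrite ?pw0 // -[n.+1]addn1 pwD zQM IH exprD expr1. Qed.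

Lemma zQ_qnum (x : Q) : zQ (qnum x) = Pq ^+ (qden x) * x.
Proof.
have := qden_mul (Pq ^+ qden x) x; rewrite -zQ_pw qden_zQ add0n => h.
apply: (@sc_inj _ _ _ (qden x)); [by rewrite qden_zQ | by [] | ].
change (zQ (pw (qden x)) * x) with (qmul (zQ (pw (qden x))) x).
by rewrite -{2}[qden x]add0n sc_mul ?qden_zQ // !sc_zQ /sc subnn zshift0 pw0 mul1r.
Qed.

Lemma qzscaleE (c : Z) (x : Q) : qzscale c x = zQ c * x.
Proof.
have := qden_mul (zQ c) x; rewrite qden_zQ add0n => h.
have h2 := qden_mkQ (qden x) (zmul c (qnum x)).
apply: (@sc_inj _ _ _ (qden x)); [by [] | by [] | ].
change (zQ c * x) with (qmul (zQ c) x).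
rewrite -{2}[qden x]add0n sc_mul ?qden_zQ // sc_zQ pw0 mul1r.
Qed.

Lemma Pq_neq0 : Pq != 0.
Proof.
apply/eqP => H; have := congr1 (sc 0) H; rewrite sc_zQ pw0 mul1r.
change (sc 0 0) with (sc 0 (qzero p)); rewrite sc_zero.
move/(congr1 (fun a : Z => trunc a 2)); rewrite trunc_pw trunc_zzero modn_small //.
by rewrite ltn_exp2l.
Qed.

Definition inP (n : nat) (x : Q) := exists b : Z, x = Pq ^+ n * zQ b.

Lemma integralE (x : Q) : integral x <-> inP 0 x.
Proof.
split.
  move=> H; exists (qnum x); rewrite expr0 mul1r zQ_qnum H expr0 mul1r //.
by move=> [b ->]; rewrite expr0 mul1r /integral qden_zQ.
Qed.

Lemma in_pnZpE n (x : Q) : in_pnZp n x <-> inP n x.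
Proof.
split.
  move=> [H1 H2]; exists (zdown n (qnum x)).
  rewrite -zQ_pw -zQM -zshiftE zdownK // -[x]mul1r -(expr0 Pq) -H1 -zQ_qnum //.
move=> [b ->]; rewrite -zQ_pw -zQM; split; first exact: qden_zQ.
by move=> i Hi; rewrite qnum_zQ -zshiftE zshift_digit.
Qed.

Lemma inP0 n : inP n 0. Proof. by exists 0; rewrite zQ0 mulr0. Qed.
Lemma inPD n x y : inP n x -> inP n y -> inP n (x + y).
Proof. by move=> [a ->] [b ->]; exists (a + b); rewrite zQD mulrDr. Qed.
Lemma inPN n x : inP n x -> inP n (- x).
Proof. by move=> [a ->]; exists (- a); rewrite zQN mulrN. Qed.
Lemma inPB n x y : inP n x -> inP n y -> inP n (x - y).
Proof. by move=> Hx Hy; apply: inPD => //; apply: inPN. Qed.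
Lemma inP_le m n x : (m <= n)%N -> inP n x -> inP m x.
Proof.
move=> H [a ->]; exists (pw (n - m) * a).
by rewrite zQM zQ_pw mulrA -exprD subnKC.
Qed.
Lemma inPM m n x y : inP m x -> inP n y -> inP (m + n) (x * y).
Proof. by move=> [a ->] [b ->]; exists (a * b); rewrite zQM exprD; ring. Qed.
Lemma inP_scale n (c x : Q) : inP (n + qden c) x -> inP n (c * x).
Proof.
move=> [a ->]; exists (qnum c * a).
rewrite zQM zQ_qnum exprD; ring.
Qed.
Lemma inP_all (x : Q) : (forall n, inP n x) -> x = 0.
Proof.
move=> H; have H0 : integral x by apply/integralE.
have Hd : forall i, qnum x i = ord0.
  move=> i; have := H i.+1; rewrite -in_pnZpE => -[_]; apply; exact: ltnSn.
apply: qnum0_zero; apply: funext => i; exact: Hd.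
Qed.

Lemma qcloseE n (x y : Q) : qclose n x y <-> inP n (y - x).
Proof. exact: in_pnZpE. Qed.

End QpBasics.

Import GRing.Theory.
Local Open Scope ring_scope.

Lemma schur_det (F : fieldType) r (A : 'M[F]_r) (b : 'M_(r,1)) (c : 'M_(1,r)) (e : 'M_1) :
  A \in unitmx -> \det (block_mx A b c e) = \det A * \det (e - c *m invmx A *m b).
Proof.
move=> HA.
have -> : block_mx A b c e = block_mx 1%:M 0 (c *m invmx A) 1%:M *m block_mx A b 0 (e - c *m invmx A *m b).
  rewrite mulmx_block; congr block_mx.
  - by rewrite mul1mx mul0mx addr0.
  - by rewrite mul1mx mul0mx addr0.
  - by rewrite mulmx0 addr0 -mulmxA mulVmx // mulmx1.
  - by rewrite mul1mx addrC subrK.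
by rewrite det_mulmx det_lblock det_ublock !det1 !mul1r.
Qed.

Import GRing.Theory.
Local Open Scope ring_scope.

Section Topo.
Variable q : nat.
Local Notation p := q.+2.
Local Notation Q := (Qp p).
Local Notation V := (vec p).

Definition close (F : seq nat) (n : nat) (x y : V) := forall i, i \in F -> inP n (y i - x i).

Lemma XPE P (x : V) : XP P x <-> forall j, j \notin P -> inP 0 (x j).
Proof. by split => H j Hj; apply/integralE; apply: H. Qed.

Definition Ccont (g : V -> V) :=
  forall P x, XP P x -> exists P', (forall y, XP P y -> XP P' (g y)) /\
    forall F n, exists F' n', forall y, XP P y -> close F' n' x y -> close F n (g x) (g y).

Lemma Ccont_tau g : Ccont g -> tau_continuous g.
Proof.
move=> Hg A HA P x HPx [HQ HAx].
have [P' [HP' Hcl]] := Hg P x HPx.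
have [F [n Hn]] := HA P' (g x) (HP' x HPx) HAx.
have [F' [n' H']] := Hcl F n.
exists F', n' => y Hy Hc; split; first by exists P.
apply: Hn; first exact: HP'.
have Hc' : close F' n' x y by move=> j Hj; apply/qcloseE; exact: Hc.
by move=> i Hi; apply/qcloseE; exact: (H' y Hy Hc' i Hi).
Qed.

Lemma tau_open_ext (A B : V -> Prop) : (forall x, A x <-> B x) -> tau_open A -> tau_open B.
Proof.
move=> E HA P x Hx /E HBx; have [F [n H]] := HA P x Hx HBx.
by exists F, n => y Hy Hc; apply/E; apply: H.
Qed.

Lemma tau_comp (g h : V -> V) : tau_continuous g -> tau_continuous h -> (forall x, QpN x -> QpN (h x)) ->
  tau_continuous (fun x => g (h x)).
Proof.
move=> Hg Hh HQ A HA.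
have := Hh _ (Hg A HA); apply: tau_open_ext => x; split.
  by move=> [H1 [H2 H3]].
by move=> [H1 H3]; split => //; split => //; apply: HQ.
Qed.

Lemma inP_int_add (a b : Q) n : inP n (b - a) -> inP 0 a -> inP 0 b.
Proof.
move=> H1 H2; rewrite -(subrK a b); apply: inPD => //.
exact: (inP_le (leq0n n)).
Qed.

Lemma tau_nbhd (g : V -> V) : tau_continuous g -> (forall x, QpN x -> QpN (g x)) ->
  forall P x, XP P x -> forall F n, exists F' n', forall y, XP P y -> close F' n' x y -> close F n (g x) (g y).
Proof.
move=> Hg HQ P x Hx F n.
have [P' HP'] := HQ x (ex_intro _ P Hx).
pose A := fun z : V => XP P' z /\ close F n (g x) z.
have HA : tau_open A.
  move=> P0 z0 Hz0 [HA1 HA2]; exists (F ++ P0), n => z Hz Hc0.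
  have Hc : close (F ++ P0) n z0 z by move=> j Hj; apply/qcloseE; exact: Hc0.
  split.
    apply/XPE => j Hj; case: (boolP (j \in P0)) => Hj0.
      apply: (@inP_int_add (z0 j) _ n); first by apply: Hc; rewrite mem_cat Hj0 orbT.
      by move/XPE: HA1; apply.
    by move/XPE: Hz; apply.
  move=> i Hi; rewrite -(subrK (z0 i) (z i)) -addrA; apply: inPD.
    by apply: Hc; rewrite mem_cat Hi.
  exact: HA2.
have HAx : A (g x) by split => // i _; rewrite subrr; exact: inP0.
have [F' [n' H]] := Hg A HA P x Hx (conj (ex_intro _ P Hx) HAx).
exists F', n' => y Hy Hc.
have Hc0 : (forall i, i \in F' -> qclose n' (x i) (y i)) by move=> i Hi; apply/qcloseE; exact: Hc.
by have [_ [_ H2]] := H y Hy Hc0.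
Qed.

End Topo.

Import GRing.Theory.
Local Open Scope ring_scope.

Section Main.
Variable q : nat.
Hypothesis hp : prime q.+2.
Local Notation p := q.+2.
Local Notation Q := (Qp p).
Local Notation V := (vec p).

Lemma qmulVf' (x : Q) : x != 0 -> qinv x * x = 1.
Proof. by move=> /eqP H; apply: (qmulV hp H). Qed.
HB.instance Definition _ := GRing.ComNzRing_isField.Build Q qmulVf' (@qinv0 q).

Lemma vaddE (x y : V) i : vadd x y i = x i + y i. Proof. by []. Qed.
Lemma vzscaleE c (x : V) i : vzscale c x i = zQ c * x i.
Proof. by rewrite /vzscale qzscaleE. Qed.
Lemma vqscaleE c (x : V) i : vqscale c x i = c * x i. Proof. by []. Qed.
Lemma vzeroE i : vzero p i = 0. Proof. by []. Qed.

Lemma QpN0 : QpN (vzero p).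
Proof. by exists [::] => j _; apply/integralE; apply: inP0. Qed.

Definition ev (i : nat) : V := fun j => if i == j then 1 else 0.

Lemma QpN_fin (P : seq nat) (x : V) : (forall j, j \notin P -> x j = 0) -> QpN x.
Proof. by move=> H; exists P => j Hj; apply/integralE; rewrite H //; apply: inP0. Qed.

Lemma QpN_ev i : QpN (ev i).
Proof. by apply: (@QpN_fin [:: i]) => j; rewrite inE /ev eq_sym => /negbTE ->. Qed.

Lemma QpN_add (x y : V) : QpN x -> QpN y -> QpN (vadd x y).
Proof.
move=> [P HP] [P' HP']; exists (P ++ P') => j; rewrite mem_cat negb_or => /andP [h1 h2].
by apply/integralE; apply: inPD; apply/integralE; [apply: HP | apply: HP'].
Qed.

Variable f : bmap p.
Hypothesis fQ : forall x, QpN x -> QpN (f x).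
Hypothesis fadd : forall x y, QpN x -> QpN y -> f (vadd x y) = vadd (f x) (f y).
Hypothesis fscale : forall c x, QpN x -> f (vzscale c x) = vzscale c (f x).
Hypothesis fcont : tau_continuous f.
Hypothesis fid : idempotentB f.

Lemma f0 : f (vzero p) = vzero p.
Proof.
have E : vzero p = vzscale 0 (vzero p) by apply: funext => i; rewrite vzscaleE zQ0 mul0r.
rewrite {1}E (fscale _ QpN0); apply: funext => i; by rewrite vzscaleE zQ0 mul0r.
Qed.

Lemma fhom c (x : V) : QpN x -> QpN (vqscale c x) -> f (vqscale c x) = vqscale c (f x).
Proof.
move=> Hx Hcx.
have E : vzscale (pw (qden c)) (vqscale c x) = vzscale (qnum c) x.
  by apply: funext => i; rewrite !vzscaleE vqscaleE zQ_pw zQ_qnum mulrA.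
have := congr1 f E; rewrite !fscale // => E2.
apply: funext => i; have := congr1 (fun w => w i) E2; rewrite /= !vzscaleE zQ_pw zQ_qnum vqscaleE.
rewrite -mulrA; apply: mulfI; apply: expf_neq0; exact: Pq_neq0.
Qed.

Definition fsv (m : nat) (c : nat -> Q) (idx : nat -> nat) : V :=
  fun j => \sum_(k < m) (if idx k == j then c k else 0).

Lemma QpN_fsv m c idx : QpN (fsv m c idx).
Proof.
apply: (@QpN_fin [seq idx k | k <- iota 0 m]) => j Hj; rewrite /fsv big1 // => k _.
case: eqP => // E; move: Hj; rewrite -E; case/mapP; exists (nat_of_ord k) => //.
by rewrite mem_iota /= add0n ltn_ord.
Qed.

Lemma fsvS m c idx : fsv m.+1 c idx = vadd (fsv m c idx) (vqscale (c m) (ev (idx m))).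
Proof.
apply: funext => j; rewrite /fsv vaddE big_ord_recr /= vqscaleE /ev.
by case: eqP; rewrite ?mulr1 ?mulr0.
Qed.

Lemma QpN_qscale c (x : V) : QpN (vqscale c x) -> QpN x -> True. Proof. by []. Qed.

Lemma QpN_ev_scale c i : QpN (vqscale c (ev i)).
Proof.
by apply: (@QpN_fin [:: i]) => j; rewrite inE vqscaleE /ev eq_sym => /negbTE ->; rewrite mulr0.
Qed.

Lemma f_fsv m c idx j : f (fsv m c idx) j = \sum_(k < m) c k * f (ev (idx k)) j.
Proof.
elim: m => [|m IH].
  rewrite big_ord0; have -> : fsv 0 c idx = vzero p by apply: funext => i; rewrite /fsv big_ord0.
  by rewrite f0.
rewrite fsvS (fadd (QpN_fsv _ _ _) (QpN_ev_scale _ _)) vaddE IH.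
by rewrite (fhom (QpN_ev _) (QpN_ev_scale _ _)) big_ord_recr.
Qed.

Lemma fsv_id m (x : V) j : fsv m x id j = if (j < m)%N then x j else 0.
Proof.
elim: m => [|m IH]; first by rewrite /fsv big_ord0.
have E : fsv m.+1 x id j = fsv m x id j + (if m == j then x m else 0) by rewrite /fsv big_ord_recr.
rewrite E IH.
case: (ltngtP j m) => H; rewrite ?addr0 ?add0r.
- by rewrite ltnS (ltnW H).
- by rewrite ltnS leqNgt H.
- by rewrite H ltnSn.
Qed.


Lemma big_vadd_eval n (w : 'I_n -> V) j :
  (\big[@vadd p/vzero p]_(i < n) w i) j = \sum_(i < n) w i j.
Proof. by rewrite (big_morph (fun w : V => w j) (id1 := 0) (op1 := +%R)). Qed.

Variable d : nat.
Variable v : 'I_d -> V.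
Hypothesis Hspan : forall x, QpN x -> exists c : 'I_d -> Q,
  f x = \big[@vadd p/vzero p]_(i < d) vqscale (c i) (v i).

Definition U i j := f (ev i) j.

Definition rk_ok k := exists R I : nat -> nat, \det (\matrix_(a < k, b < k) U (R a) (I b)) != 0.

Lemma rk_bound k : rk_ok k -> (k <= d)%N.
Proof.
move=> [R [I H]].
pose C := fun i => proj1_sig (cid (Hspan (QpN_ev i))).
have HC i : f (ev i) = \big[@vadd p/vzero p]_(t < d) vqscale (C i t) (v t) := proj2_sig (cid (Hspan (QpN_ev i))).
have E : \matrix_(a < k, b < k) U (R a) (I b) =
    (\matrix_(a < k, t < d) C (R a) t) *m (\matrix_(t < d, b < k) v t (I b)).
  apply/matrixP => a b; rewrite !mxE /U HC big_vadd_eval; apply: eq_bigr => t _; by rewrite !mxE.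
have Hu : (\matrix_(a < k, b < k) U (R a) (I b)) \in unitmx by rewrite unitmxE unitfE.
have := mxrank_unit Hu; rewrite E => Hr.
by rewrite -Hr (leq_trans (mxrankM_maxr _ _)) // rank_leq_row.
Qed.

Lemma rk_ok0 : rk_ok 0.
Proof. by exists id, id; rewrite det_mx00 oner_neq0. Qed.

Lemma rk_ex : exists k, `[< rk_ok k >].
Proof. by exists 0%N; apply/asboolP; exact: rk_ok0. Qed.

Lemma rk_le : forall k, `[< rk_ok k >] -> (k <= d)%N.
Proof. by move=> k /asboolP; apply: rk_bound. Qed.

Definition r := ex_maxn rk_ex rk_le.

Lemma r_ok : rk_ok r.
Proof. by rewrite /r; case: ex_maxnP => i /asboolP. Qed.

Lemma r_max k : rk_ok k -> (k <= r)%N.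
Proof. by rewrite /r; case: ex_maxnP => i _ H /asboolP; apply: H. Qed.

Lemma RI_ex : exists RI : (nat -> nat) * (nat -> nat),
  \det (\matrix_(a < r, b < r) U (RI.1 a) (RI.2 b)) != 0.
Proof. by have [R [I H]] := r_ok; exists (R, I). Qed.

Definition RI := proj1_sig (cid RI_ex).
Definition Rr := RI.1.
Definition Ir := RI.2.
Definition Am := \matrix_(a < r, b < r) U (Rr a) (Ir b).
Definition Ainv := invmx Am.

Lemma Am_unit : Am \in unitmx.
Proof. by rewrite unitmxE unitfE; exact: (proj2_sig (cid RI_ex)). Qed.

Definition K (a : 'I_r) j := \sum_(b < r) Ainv a b * U (Rr b) j.

Lemma fact_U i j : U i j = \sum_(a < r) U i (Ir a) * K a j.
Proof.
pose R' := fun a : nat => if (a < r)%N then Rr a else i.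
pose I' := fun a : nat => if (a < r)%N then Ir a else j.
have H0 : \det (\matrix_(a < r + 1, b < r + 1) U (R' a) (I' b)) = 0.
  apply/eqP; apply: contraT => H.
  have := r_max (ex_intro _ R' (ex_intro _ I' H)); rewrite addn1 ltnn //.
have EM : \matrix_(a < r + 1, b < r + 1) U (R' a) (I' b) =
   block_mx Am (\matrix_(a < r, b < 1) U (Rr a) j) (\matrix_(a < 1, b < r) U i (Ir b))
            (\matrix_(a < 1, b < 1) U i j).
  rewrite -[LHS]submxK; congr block_mx; apply/matrixP => a b; rewrite !mxE /= /R' /I' ?ltn_ord //;
    rewrite ?(ord1 a) ?(ord1 b) /= ?addn0 ?ltnn ?ltn_ord //.
rewrite EM schur_det ?Am_unit // in H0.
move/eqP: H0; rewrite mulf_eq0 (negbTE (proj2_sig (cid RI_ex))) /= det_mx11 !mxE subr_eq0 => /eqP ->.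
rewrite (eq_bigr (fun b => \sum_(a < r) U i (Ir a) * Ainv a b * U (Rr b) j)); last first.
  move=> b _; rewrite !mxE mulr_suml; apply: eq_bigr => a _; by rewrite !mxE.
rewrite exchange_big /=; apply: eq_bigr => a _.
rewrite /K mulr_sumr; apply: eq_bigr => b _; by rewrite mulrA.
Qed.


Lemma fact_fin m (x : V) j :
  f (fsv m x id) j = \sum_(a < r) f (fsv m x id) (Ir a) * K a j.
Proof.
rewrite f_fsv.
under eq_bigr => k _ do rewrite -/(U k j) fact_U mulr_sumr.
rewrite exchange_big /=; apply: eq_bigr => a _.
rewrite f_fsv mulr_suml; apply: eq_bigr => k _; by rewrite mulrA.
Qed.

Definition smax (s : seq nat) := foldr maxn 0%N s.
Lemma smax_ge s i : i \in s -> (i <= smax s)%N.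
Proof.
elim: s => [|a s IH] //=; rewrite inE => /orP [/eqP ->|H]; first by rewrite leq_maxl.
by rewrite (leq_trans (IH H)) // leq_maxr.
Qed.

Lemma fact_all (x : V) : QpN x -> forall j, f x j = \sum_(a < r) f x (Ir a) * K a j.
Proof.
move=> [P HP] j.
pose hh (w : V) := w j - \sum_(a < r) w (Ir a) * K a j.
apply/eqP; rewrite -subr_eq0 -/(hh (f x)); apply/eqP; apply: inP_all => n.
pose Kd := (\max_(a < r) qden (K a j))%N.
pose F := j :: [seq Ir a | a <- iota 0 r].
have [F' [n' H]] := tau_nbhd fcont fQ HP F (n + Kd).
pose m := (smax F').+1.
pose y := fsv m x id.
have Hy : XP P y.
  move=> j' Hj'; rewrite /y fsv_id; case: ifP => _; first exact: HP.
  by apply/integralE; apply: inP0.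
have Hc : close F' n' x y.
  move=> i Hi; rewrite /y fsv_id ltnS smax_ge // subrr; exact: inP0.
have Hcl := H y Hy Hc.
have Hhy : hh (f y) = 0 by rewrite /hh fact_fin subrr.
rewrite -(subr0 (hh (f x))) -Hhy.
have -> : hh (f x) - hh (f y) = (f x j - f y j) - \sum_(a < r) (f x (Ir a) - f y (Ir a)) * K a j.
  rewrite /hh; under [in RHS]eq_bigr => a _ do rewrite mulrBl.
  rewrite sumrB; ring.
apply: inPB.
  rewrite -opprB; apply: inPN; apply: (inP_le (leq_addr Kd n)); apply: Hcl; exact: mem_head.
apply: (big_ind (inP n)); [exact: inP0 | by move=> a b; apply: inPD | move=> a _].
rewrite mulrC; apply: inP_scale; apply: (inP_le (m := (n + qden (K a j))%N) (n := (n + Kd)%N)).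
  by rewrite leq_add2l /Kd (leq_bigmax a).
rewrite -opprB; apply: inPN; apply: Hcl.
by rewrite inE; apply/orP; right; apply/mapP; exists (nat_of_ord a) => //; rewrite mem_iota ltn_ord.
Qed.


Definition fsvo m (c : 'I_m -> Q) (idx : 'I_m -> nat) : V :=
  fun j => \sum_(k < m) (if idx k == j then c k else 0).

Lemma fsvoE m (c : 'I_m -> Q) (idx : 'I_m -> nat) :
  fsvo c idx = fsv m (fun k => if insub k is Some o then c o else 0)
                     (fun k => if insub k is Some o then idx o else 0%N).
Proof. by apply: funext => j; apply: eq_bigr => k _; rewrite valK. Qed.

Lemma QpN_fsvo m (c : 'I_m -> Q) idx : QpN (fsvo c idx).
Proof. by rewrite fsvoE; apply: QpN_fsv. Qed.

Lemma f_fsvo m (c : 'I_m -> Q) idx j : f (fsvo c idx) j = \sum_(k < m) c k * f (ev (idx k)) j.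
Proof. by rewrite fsvoE f_fsv; apply: eq_bigr => k _; rewrite valK. Qed.

Definition Sop (x : V) : V := fun i => if (i < r)%N then 0 else x (i - r)%N.
Definition Top (x : V) : V := fun i => x (i + r)%N.
Definition Jop (x : V) : V := fun i => if (i < r)%N then x (Ir i) else 0.
Definition coefG (x : V) (b : 'I_r) := \sum_(a < r) x a * Ainv a b.
Definition Gop (x : V) : V := fsvo (coefG x) (fun b => Rr b).

Lemma fGop (w : V) l : f (Gop w) l = \sum_(a < r) w a * K a l.
Proof.
rewrite f_fsvo /coefG.
under eq_bigr => b _ do rewrite mulr_suml.
rewrite exchange_big /=; apply: eq_bigr => a _.
rewrite /K mulr_sumr; apply: eq_bigr => b _; by rewrite mulrA.
Qed.

Lemma K_I (a l : 'I_r) : K a (Ir l) = (a == l)%:R.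
Proof.
have := congr1 (fun M : 'M[Q]_r => M a l) (mulVmx Am_unit); rewrite !mxE => <-.
by apply: eq_bigr => b _; rewrite /Ainv !mxE.
Qed.

Lemma sum_delta (x : V) (l : 'I_r) : \sum_(a < r) x a * (a == l)%:R = x l.
Proof.
rewrite (bigD1 l) //= eqxx mulr1 big1 ?addr0 // => a /negbTE ->; by rewrite mulr0.
Qed.

Lemma QpN_Gop x : QpN (Gop x). Proof. exact: QpN_fsvo. Qed.

Lemma Ccont0 : Ccont (fun _ : V => vzero p).
Proof.
move=> P x Hx; exists [::]; split; first by move=> y _ j _; apply/integralE; apply: inP0.
by move=> F n; exists [::], 0%N => y _ _ i _; rewrite subrr; apply: inP0.
Qed.

Lemma Ccont_S : Ccont Sop.
Proof.
move=> P x Hx; exists [seq (j + r)%N | j <- P]; split.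
  move=> y Hy i Hi; rewrite /Sop; case: ifP => H; first by apply/integralE; apply: inP0.
  apply: Hy; apply: contra Hi => Hi; apply/mapP; exists (i - r)%N => //.
  by rewrite subnK // leqNgt H.
move=> F n; exists [seq (i - r)%N | i <- F], n => y Hy Hc i Hi; rewrite /Sop.
case: ifP => H; first by rewrite subrr; apply: inP0.
by apply: Hc; apply/mapP; exists i.
Qed.

Lemma Ccont_T : Ccont Top.
Proof.
move=> P x Hx; exists [seq (j - r)%N | j <- P]; split.
  move=> y Hy i Hi; rewrite /Top; apply: Hy; apply: contra Hi => Hi; apply/mapP.
  by exists (i + r)%N => //; rewrite addnK.
move=> F n; exists [seq (i + r)%N | i <- F], n => y Hy Hc i Hi; rewrite /Top.
by apply: Hc; apply/mapP; exists i.
Qed.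

Lemma Ccont_J : Ccont Jop.
Proof.
move=> P x Hx; exists (iota 0 r); split.
  move=> y Hy i Hi; rewrite /Jop; case: ifP => H; last by apply/integralE; apply: inP0.
  by move: Hi; rewrite mem_iota /= add0n H.
move=> F n; exists [seq Ir i | i <- iota 0 r], n => y Hy Hc i Hi; rewrite /Jop.
case: ifP => H; last by rewrite subrr; apply: inP0.
by apply: Hc; apply/mapP; exists i => //; rewrite mem_iota add0n H.
Qed.

Definition Kg := (\max_(a < r) \max_(b < r) qden (Ainv a b))%N.

Lemma Ccont_G : Ccont Gop.
Proof.
move=> P x Hx; exists [seq Rr i | i <- iota 0 r]; split.
  move=> y Hy i Hi; apply/integralE; rewrite /Gop /fsvo big1; first exact: inP0.
  move=> b _; case: eqP => // E; move: Hi; rewrite -E; case/mapP.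
  by exists (nat_of_ord b); rewrite // mem_iota add0n ltn_ord.
move=> F n; exists (iota 0 r), (n + Kg)%N => y Hy Hc i Hi; rewrite /Gop /fsvo -sumrB.
apply: (big_ind (inP n)); [exact: inP0 | by move=> a b; apply: inPD | move=> b _].
case: eqP => _; last by rewrite subrr; apply: inP0.
rewrite /coefG -sumrB.
apply: (big_ind (inP n)); [exact: inP0 | by move=> a' b'; apply: inPD | move=> a _].
rewrite -mulrBl mulrC; apply: inP_scale.
apply: (inP_le (m := (n + qden (Ainv a b))%N) (n := (n + Kg)%N)).
  rewrite leq_add2l /Kg (leq_trans _ (leq_bigmax a)) //.
  exact: (leq_bigmax b).
by apply: Hc; rewrite mem_iota add0n ltn_ord.
Qed.


Lemma Ccont_QpN (g : V -> V) : Ccont g -> forall x, QpN x -> QpN (g x).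
Proof. by move=> Hg x [P HP]; have [P' [H _]] := Hg P x HP; exists P'; apply: H. Qed.

Lemma Sop_add x y : Sop (vadd x y) = vadd (Sop x) (Sop y).
Proof. by apply: funext => i; rewrite /Sop !vaddE; case: ifP; rewrite ?addr0. Qed.
Lemma Sop_scale c x : Sop (vzscale c x) = vzscale c (Sop x).
Proof. by apply: funext => i; rewrite /Sop !vzscaleE; case: ifP; rewrite ?mulr0. Qed.
Lemma Top_add x y : Top (vadd x y) = vadd (Top x) (Top y).
Proof. by []. Qed.
Lemma Top_scale c x : Top (vzscale c x) = vzscale c (Top x).
Proof. by []. Qed.
Lemma Jop_add x y : Jop (vadd x y) = vadd (Jop x) (Jop y).
Proof. by apply: funext => i; rewrite /Jop !vaddE; case: ifP; rewrite ?addr0. Qed.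
Lemma Jop_scale c x : Jop (vzscale c x) = vzscale c (Jop x).
Proof. by apply: funext => i; rewrite /Jop !vzscaleE; case: ifP; rewrite ?mulr0. Qed.
Lemma Gop_add x y : Gop (vadd x y) = vadd (Gop x) (Gop y).
Proof.
apply: funext => i; rewrite /Gop /fsvo vaddE -big_split; apply: eq_bigr => b _ /=.
case: eqP => _; last by rewrite addr0.
by rewrite /coefG -big_split; apply: eq_bigr => a _; rewrite vaddE mulrDl.
Qed.
Lemma Gop_scale c x : Gop (vzscale c x) = vzscale c (Gop x).
Proof.
apply: funext => i; rewrite /Gop /fsvo vzscaleE mulr_sumr; apply: eq_bigr => b _ /=.
case: eqP => _; last by rewrite mulr0.
by rewrite /coefG mulr_sumr; apply: eq_bigr => a _; rewrite vzscaleE mulrA.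
Qed.

Lemma inB_zero : inB (@zeroB p).
Proof.
split.
- by move=> x _; exact: QpN0.
- by move=> x y _ _; apply: funext => i; rewrite vaddE addr0.
- by move=> c x _; apply: funext => i; rewrite vzscaleE mulr0.
- exact: Ccont_tau Ccont0.
Qed.

Lemma inB_S : inB Sop.
Proof.
split; [exact: Ccont_QpN Ccont_S | by move=> x y _ _; apply: Sop_add |
  by move=> c x _; apply: Sop_scale | exact: Ccont_tau Ccont_S].
Qed.

Lemma inB_T : inB Top.
Proof.
split; [exact: Ccont_QpN Ccont_T | by move=> x y _ _; apply: Top_add |
  by move=> c x _; apply: Top_scale | exact: Ccont_tau Ccont_T].
Qed.

Definition x01 : bmap p := fun x => f (Gop x).
Definition y10 : bmap p := fun x => Jop (f x).

Lemma inB_x01 : inB x01.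
Proof.
split.
- by move=> x _; apply: fQ; apply: QpN_Gop.
- by move=> x y _ _; rewrite /x01 Gop_add (fadd (QpN_Gop x) (QpN_Gop y)).
- by move=> c x _; rewrite /x01 Gop_scale (fscale c (QpN_Gop x)).
- apply: tau_comp => //; [exact: Ccont_tau Ccont_G | by move=> x _; apply: QpN_Gop].
Qed.

Lemma inB_y10 : inB y10.
Proof.
split.
- by move=> x Hx; apply: (Ccont_QpN Ccont_J); apply: fQ.
- by move=> x y Hx Hy; rewrite /y10 fadd // Jop_add.
- by move=> c x Hx; rewrite /y10 fscale // Jop_scale.
- by apply: tau_comp => //; exact: Ccont_tau Ccont_J.
Qed.

Definition xm : mx p (1 + 1) (1 + 1) := fun i j =>
  if (i : nat) == 0%N then (if (j : nat) == 1%N then x01 else @zeroB p)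
  else (if (j : nat) == 1%N then Top else @zeroB p).
Definition ym : mx p (1 + 1) (1 + 1) := fun i j =>
  if (i : nat) == 0%N then @zeroB p else (if (j : nat) == 0%N then y10 else Sop).

Lemma mxmul2 (X Y : mx p (1 + 1) (1 + 1)) i j x l :
  mxmul X Y i j x l = X i (Ordinal (isT : (0 < 1 + 1)%N)) (Y (Ordinal (isT : (0 < 1 + 1)%N)) j x) l
                    + X i (Ordinal (isT : (1 < 1 + 1)%N)) (Y (Ordinal (isT : (1 < 1 + 1)%N)) j x) l.
Proof.
rewrite /mxmul big_vadd_eval big_ord_recr big_ord_recr big_ord0 /= add0r.
by congr (X i _ (Y _ j x) l + X i _ (Y _ j x) l); apply: val_inj.
Qed.

Lemma dsumE (g : bmap p) (i j : 'I_(1 + 1)) :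
  dsum_id (mx1 g) 1 i j =
  if ((i : nat) == 0%N) && ((j : nat) == 0%N) then g
  else if ((i : nat) == 1%N) && ((j : nat) == 1%N) then @idB p else @zeroB p.
Proof.
rewrite /dsum_id; case: splitP => [a Ha|a Ha]; case: splitP => [b Hb|b Hb];
  rewrite Ha Hb ?(ord1 a) ?(ord1 b) //=.
Qed.

Lemma main_mvn : mvn_equiv (dsum_id (mx1 f) 1) (dsum_id (mx1 (@zeroB p)) 1).
Proof.
exists xm, ym; split.
- move=> i j; rewrite /xm; case: ifP => _; case: ifP => _;
    [exact: inB_x01 | exact: inB_zero | exact: inB_T | exact: inB_zero].
- move=> i j; rewrite /ym; case: ifP => _; [exact: inB_zero | case: ifP => _];
    [exact: inB_y10 | exact: inB_S].
- move=> i j x Hx; apply: funext => l; rewrite mxmul2 dsumE /xm /ym /=.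
  case: i => [[|[|i]] Hi] //=; case: j => [[|[|j]] Hj] //=.
  + rewrite /x01 /y10 add0r fGop (fact_all Hx l); apply: eq_bigr => a _; by rewrite /Jop ltn_ord.
  + rewrite /x01 add0r fGop big1 // => a _; by rewrite /Sop ltn_ord mul0r.
  + by rewrite /Top /y10 /Jop add0r ltnNge leq_addl.
  + by rewrite /Top /Sop add0r ltnNge leq_addl /= addnK.
- move=> i j x Hx; apply: funext => l; rewrite mxmul2 dsumE /xm /ym /=.
  case: i => [[|[|i]] Hi] //=; case: j => [[|[|j]] Hj] //=; rewrite ?addr0 //.
  + by rewrite /y10 f0 /Jop /Sop; case: ifP; rewrite ?addr0.
  + rewrite /y10 /x01 (fid (QpN_Gop x)) /Jop /Sop /Top.
    case: ifP => H; last by rewrite add0r subnK // leqNgt H.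
    rewrite addr0 (fGop x (Ir (Ordinal H))).
    under eq_bigr => a _ do rewrite K_I.
    exact: (sum_delta x (Ordinal H)).
Qed.

End Main.

Theorem lemma3p15_final (p : nat) (hp : prime p) (f : bmap p) :
  inB f -> idempotentB f -> image_findim f ->
  stably_equiv (mx1 f) (mx1 (@zeroB p)).
Proof.
case: p hp f => [|[|q]] // hp f [fQ fadd fscale fcont] fid [d [v [_ Hspan]]].
by exists 1%N; apply: (main_mvn hp fQ fadd fscale fcont fid Hspan).
Qed.


Theorem lemma3p15 (p : nat) (hp : prime p) (f : bmap p) :
  inB f -> idempotentB f -> image_findim f ->
  stably_equiv (mx1 f) (mx1 (@zeroB p)).
Proof. exact: lemma3p15_final. Qed.
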